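(* Let $\Phi:\mathbb R^d\to\mathbb R$ have a unique minimizer $\theta^*$ and be twice continuously differentiable near $\theta^*$ with positive definite Hessian $\nabla^2\Phi(\theta^* )$ having eigenvalues $0<\lambda_1\le\cdots\le\lambda_d$. Let $\Gamma\in\mathbb R^{d\times d}$ be a symmetric positive semi-definite matrix (the covariance matrix $\mathbb E[g(X_1,\theta^* )g(X_1,\theta^* )^\top]$ of the stochastic gradient at $\theta^*$), and let $\delta>1/\lambda_1$. Define $$\Sigma=\delta\int_0^\infty e^{t/\delta}e^{-t\nabla^2\Phi(\theta^* )}\Gamma e^{-t\nabla^2\Phi(\theta^* )}\,dt,\qquad \Delta=\nabla^2\Phi(\theta^* )^{-1}\Gamma\,\nabla^2\Phi(\theta^* )^{-1}.$$ Then $\Sigma-\Delta$ is positive semi-definite and $$\|\Sigma-\Delta\|_{\mathrm{op}}\le\frac{(\delta\lambda_d-1)^2}{2\delta\lambda_d-1}\|\Delta\|_{\mathrm{op}}.$$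
   Context: $\|M\|_{\mathrm{op}}$ is the operator norm of a symmetric matrix $M$, i.e. its largest eigenvalue in absolute value. *)

(* Defs.v *)
From HB Require Import structures.
From mathcomp Require Import all_boot all_order all_algebra.
From mathcomp Require Import all_classical all_reals all_analysis.
Set Implicit Arguments. Unset Strict Implicit. Unset Printing Implicit Defensive.
Import Order.TTheory GRing.Theory Num.Theory.
Local Open Scope ring_scope.
Local Open Scope classical_set_scope.

Definition expm (R : realType) (d : nat) (A : 'M[R]_d) : 'M[R]_d :=
  \matrix_(i, j) limn (fun n : nat => ((\sum_(k < n) (k`!%:R)^-1 *: A ^+ k) i j : R^o)).

Definition symmetric (R : realType) (d : nat) (M : 'M[R]_d) : Prop := M^T = M.

Definition posdef (R : realType) (d : nat) (M : 'M[R]_d) : Prop :=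
  symmetric M /\ forall x : 'rV[R]_d, x != 0 -> 0 < (x *m M *m x^T) 0 0.

Definition psd (R : realType) (d : nat) (M : 'M[R]_d) : Prop :=
  symmetric M /\ forall x : 'rV[R]_d, 0 <= (x *m M *m x^T) 0 0.

(* Operator norm of a symmetric matrix: largest eigenvalue in absolute value. *)
Definition opnorm (R : realType) (d : nat) (M : 'M[R]_d) : R :=
  sup [set `|a| | a in [set a : R | eigenvalue M a]].

Definition SigmaM (R : realType) (d : nat) (delta : R) (H Gamma : 'M[R]_d) : 'M[R]_d :=
  \matrix_(i, j) (delta * Rintegral (@lebesgue_measure R) `[0%R, +oo[%classic
     (fun t : R => expR (t / delta) *
        (expm (- (t *: H)) *m Gamma *m expm (- (t *: H))) i j)).

Definition DeltaM (R : realType) (d : nat) (H Gamma : 'M[R]_d) : 'M[R]_d :=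
  invmx H *m Gamma *m invmx H.

(* Main.v *)
Require Import Defs.
From HB Require Import structures.
From mathcomp Require Import all_boot all_order all_algebra.
From mathcomp Require Import all_classical all_reals all_analysis.
From mathcomp Require Import complex ring lra.
Import Order.TTheory GRing.Theory Num.Theory.
Import numFieldNormedType.Exports.
Local Open Scope ring_scope.
Set Implicit Arguments. Unset Strict Implicit. Unset Printing Implicit Defensive.

Lemma row_unit_neq0 (F : fieldType) n (P : 'M[F]_n) i : P \in unitmx -> row i P != 0.
Proof.
move=> Pu; apply/eqP => h.
have := congr1 (row i) (mulmxV Pu); rewrite row_mul h mul0mx => /rowP /(_ i).
by rewrite !mxE eqxx => /eqP; rewrite eq_sym oner_eq0.
Qed.

Section Spec.
Variable R : rcfType.

Lemma sym_eigen_ex n (S : 'M[R]_n.+1) : S^T = S -> exists a, eigenvalue S a.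
Proof.
move=> Ssym.
pose f := real_complex R.
pose Sc := map_mx f S.
have Scs : Sc \is symmetricmx.
  by apply/is_hermitianmxP; rewrite expr0 scale1r; apply/matrixP => i j; rewrite !mxE -{1}Ssym mxE.
have Scr : Sc \is a mxOver Num.real.
  by apply/mxOverP => i j; rewrite mxE; apply/complex_realP; exists (S i j).
have Sh := realsym_hermsym Scs Scr.
have /orthomx_spectralP E := hermitian_normalmx Sh.
have /mxOverP Dreal := hermitian_spectral_diag_real Sh.
have /complex_realP [k Ek] := Dreal 0 0.
exists k.
rewrite eigenvalue_root_char -(fmorph_root f) map_char_poly -eigenvalue_root_char.
apply/eigenvalueP.
set P := spectralmx Sc in E.
have Pu : P \in unitmx by exact: spectral_unit.
exists (row 0 P).
  rewrite -/Sc -row_mul {1}E !mulmxA mulmxV // mul1mx row_mul.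
  apply/rowP => j; rewrite !mxE (bigD1 0) //= big1 ?addr0; last by move=> l /negbTE l0; rewrite !mxE eq_sym l0 mulr0n mul0r.
  by rewrite !mxE eqxx mulr1n Ek.
exact: row_unit_neq0.
Qed.
Lemma nsqE n (v : 'rV[R]_n) : (v *m v^T) 0 0 = \sum_j v 0 j ^+ 2.
Proof. by rewrite mxE; apply: eq_bigr => j _; rewrite mxE expr2. Qed.

Lemma nsq_ge0 n (v : 'rV[R]_n) : 0 <= (v *m v^T) 0 0.
Proof. by rewrite nsqE sumr_ge0 // => j _; rewrite sqr_ge0. Qed.

Lemma nsq_eq0 n (v : 'rV[R]_n) : ((v *m v^T) 0 0 == 0) = (v == 0).
Proof.
rewrite nsqE; apply/eqP/eqP => [h|->]; last by rewrite big1 // => j _; rewrite mxE expr0n.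
apply/rowP => j; rewrite mxE; have := psumr_eq0P (fun i _ => sqr_ge0 (v 0 i)) h (erefl true : predT j).
move=> h2; apply/eqP; rewrite -sqrf_eq0; apply/eqP; exact: h2.
Qed.

Lemma householder n (u : 'rV[R]_n.+1) : (u *m u^T) 0 0 = 1 ->
  exists Q : 'M[R]_n.+1, Q *m Q^T = 1%:M /\ row 0 Q = u.
Proof.
move=> hu.
pose e : 'rV[R]_n.+1 := delta_mx 0 0.
pose w := u - e.
pose s := (w *m w^T) 0 0.
pose c := 2 / s.
pose X := w^T *m w.
pose Q := 1%:M - c *: X.
have ww : w *m w^T = s%:M by rewrite [LHS]mx11_scalar.
have XX : X *m X = s *: X.
  by rewrite /X mulmxA -(mulmxA w^T) ww mul_mx_scalar -scalemxAl.
have Xe i j : X i j = w 0 i * w 0 j.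
  by rewrite !mxE big_ord1 !mxE.
have se : s = 2 - 2 * u 0 0.
  rewrite /s nsqE (bigD1 0) //=.
  have := hu; rewrite nsqE (bigD1 0) //= => hu'.
  have -> : \sum_(j < n.+1 | j != 0) w 0 j ^+ 2 = \sum_(j < n.+1 | j != 0) u 0 j ^+ 2.
    by apply: eq_bigr => j /negbTE j0; rewrite !mxE j0 /= subr0.
  have -> : \sum_(j < n.+1 | j != 0) u 0 j ^+ 2 = 1 - u 0 0 ^+ 2 by rewrite -hu'; ring.
  rewrite !mxE eqxx /=; ring.
exists Q; split.
  have QT : Q^T = Q.
    by rewrite /Q raddfB /= trmx1 linearZ /= /X trmx_mul trmxK.
  rewrite QT /Q mulmxBl mul1mx mulmxBr mulmx1 -scalemxAl -scalemxAr scalerA XX scalerA.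
  have [s0|s0] := eqVneq s 0.
    by rewrite /c s0 invr0 !mulr0 !scale0r !subr0.
  have -> : c * c * s = c + c by rewrite /c; field.
  by rewrite scalerDl; apply/matrixP => i j; rewrite !mxE; ring.
apply/rowP => j; rewrite !mxE big_ord1 !mxE eqxx /=.
have [s0|s0] := eqVneq s 0.
  have /eqP w0 : w == 0 by rewrite -nsq_eq0 -/s s0.
  have ue : u = e by apply/eqP; rewrite -subr_eq0 -/w w0.
  by rewrite ue !mxE eqxx /= subrr mul0r mulr0 subr0 eq_sym.
have -> : c * ((u ord0 0 - 1) * (u ord0 j - (j == 0)%:R)) = - (u ord0 j - (j == 0)%:R).
  have h2 : 2 - 2 * u 0 0 != 0 by rewrite -se.
  rewrite /c se; field; done.
by rewrite eq_sym; ring.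
Qed.

Lemma spectral_real n (S : 'M[R]_n) : S^T = S ->
  exists (P : 'M[R]_n) (D : 'rV[R]_n), P *m P^T = 1%:M /\ S = P^T *m diag_mx D *m P.
Proof.
elim: n S => [|n IH] S Ss.
  exists 1%:M, 0; split; first by rewrite trmx1 mulmx1.
  by apply/matrixP => [] [].
have [a /eigenvalueP [v vS v0]] := sym_eigen_ex Ss.
pose r := (v *m v^T) 0 0.
have r0 : 0 < r by rewrite lt_def nsq_eq0 v0 nsq_ge0.
pose u := (Num.sqrt r)^-1 *: v.
have hu : (u *m u^T) 0 0 = 1.
  rewrite /u linearZ /= -scalemxAl -scalemxAr 2!mxE -/r mulrA -expr2 exprVn sqr_sqrtr ?ltW //.
  by rewrite mulVf // gt_eqF.
have uS : u *m S = a *: u by rewrite /u -scalemxAl vS !scalerA mulrC.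
have [Q1 [Q1o Q1r]] := householder hu.
have Q1o' : Q1^T *m Q1 = 1%:M := mulmx1C Q1o.
pose T : 'M[R]_(1 + n) := Q1 *m S *m Q1^T.
have Ts : T^T = T by rewrite /T !trmx_mul trmxK Ss mulmxA.
have Tr0 : row 0 T = a *: row 0 (1%:M : 'M[R]_n.+1).
  by rewrite /T !row_mul Q1r uS -scalemxAl -Q1r -row_mul Q1o.
have l0 : lshift n (0 : 'I_1) = 0 by apply/val_inj.
have Tur : ursubmx T = 0.
  apply/matrixP => i j; rewrite ord1 [RHS]mxE [LHS]mxE [LHS]mxE.
  have -> : T (lshift n 0) (rshift 1 j) = (row 0 T) 0 (rshift 1 j).
    by rewrite [RHS]mxE l0.
  by rewrite Tr0 !mxE; case: j => j hj /=; rewrite mulr0n mulr0.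
have Tdl : dlsubmx T = 0 by apply: trmx_inj; rewrite trmx_dlsub Ts Tur trmx0.
have Tul : ulsubmx T = a%:M.
  apply/matrixP => i j; rewrite !ord1 [RHS]mxE [LHS]mxE [LHS]mxE /=.
  have -> : T (lshift n 0) (lshift n 0) = (row 0 T) 0 0.
    by rewrite [RHS]mxE l0.
  by rewrite Tr0 !mxE eqxx mulr1.
pose S' := drsubmx T.
have S's : S'^T = S' by rewrite /S' trmx_drsub Ts.
have [P' [D' [P'o S'e]]] := IH S' S's.
pose B : 'M[R]_(1 + n) := block_mx 1%:M 0 0 P'.
have BBt : B *m B^T = 1%:M.
  rewrite /B tr_block_mx mulmx_block !trmx0 trmx1 !mulmx0 !mul0mx !mulmx1 !addr0 !add0r P'o.
  by rewrite -scalar_mx_block.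
exists (B *m Q1), (row_mx (a%:M : 'rV[R]_1) D'); split.
  by rewrite trmx_mul mulmxA -(mulmxA B) Q1o mulmx1 BBt.
have -> : S = Q1^T *m T *m Q1 by rewrite /T !mulmxA Q1o' mul1mx -mulmxA Q1o' mulmx1.
rewrite -[T]submxK Tur Tdl Tul -/S' S'e trmx_mul !mulmxA.
have -> : diag_mx (row_mx (a%:M : 'rV_1) D') = block_mx (diag_mx (a%:M : 'rV_1)) 0 0 (diag_mx D') := diag_mx_row _ _.
congr (_ *m _); rewrite -!mulmxA; congr (_ *m _).
change (block_mx (a%:M : 'M[R]_1) 0 0 (P'^T *m (diag_mx D' *m P')) = (B^T *m (block_mx (diag_mx (a%:M : 'rV_1)) 0 0 (diag_mx D') *m B) : 'M[R]_(1+n))).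
rewrite /B tr_block_mx !mulmx_block !trmx0 trmx1 !mulmx0 !mul0mx !mulmx1 !mul1mx !addr0 !add0r.
congr block_mx; first by apply/matrixP => i j; rewrite !ord1 !mxE.
all: by rewrite ?mulmx0 ?mul0mx ?mulmxA.
Qed.
End Spec.

Local Open Scope classical_set_scope.

Section An.
Variable R : realType.
Notation mu := (@lebesgue_measure R).
Let D : set R := `[0%R, +oo[%classic.
Let mD : measurable D. Proof. exact: measurable_itv. Qed.

Lemma int_exp1 (b c : R) : 0 < b ->
  mu.-integrable D (EFin \o (fun t => c * expR (- (b * t)))) /\
  Rintegral mu D (fun t => c * expR (- (b * t))) = c / b.
Proof.
move=> b0.
pose g := fun t : R => b * expR (- b * t).
have ig : mu.-integrable D (EFin \o g).
  have h := (@integrable_mkcond _ _ _ mu D (EFin \o g) mD); apply/h; rewrite restrict_EFin.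
  exact: (integrable_exponential_pdf b0).
have Ig : Rintegral mu D g = 1.
  rewrite Rintegral_mkcond /Rintegral.
  by have := integral_exponential_pdf b0; rewrite /exponential_pdf => ->.
have fe : (fun t => c * expR (- (b * t))) = (fun t => (c / b) * g t).
  by apply/funext => t; rewrite /g mulrA divfK ?gt_eqF // mulNr.
rewrite fe; split.
  apply: (@eq_integrable _ _ _ mu D mD (fun x => ((c / b)%:E * (EFin \o g) x)%E)).
    by move=> x _; rewrite /= EFinM.
  exact: integrableZl.
by rewrite RintegralZl // Ig mulr1.
Qed.


Lemma int_expsum_seq (I : Type) (s : seq I) (c b : I -> R) : (forall i, 0 < b i) ->
  mu.-integrable D (EFin \o (fun t => \sum_(i <- s) c i * expR (- (b i * t)))) /\
  Rintegral mu D (fun t => \sum_(i <- s) c i * expR (- (b i * t))) = \sum_(i <- s) c i / b i.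
Proof.
move=> b0; elim: s => [|x s [IHi IHI]].
  under eq_fun do rewrite big_nil; rewrite big_nil; split.
    apply: (@eq_integrable _ _ _ mu D mD (cst 0%E)) => //.
    exact: integrable0.
  by rewrite Rintegral_cst // mul0r.
have [ix Ix] := int_exp1 (c x) (b0 x).
under eq_fun do rewrite big_cons; rewrite big_cons; split.
  apply: (@eq_integrable _ _ _ mu D mD ((EFin \o (fun t => c x * expR (- (b x * t)))) \+
     (EFin \o (fun t => \sum_(i <- s) c i * expR (- (b i * t)))))).
    by move=> t _; rewrite /= EFinD.
  exact: integrableD.
by rewrite RintegralD // Ix IHI.
Qed.

Lemma int_expsum (I : finType) (c b : I -> R) : (forall i, 0 < b i) ->
  Rintegral mu D (fun t => \sum_i c i * expR (- (b i * t))) = \sum_i c i / b i.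
Proof. by move=> b0; have [] := int_expsum_seq (index_enum I) c b0. Qed.

Lemma cvg_sum_seq (I : Type) (s : seq I) (u : I -> nat -> R) (l : I -> R) :
  (forall i, u i n @[n --> \oo] --> l i) ->
  (\sum_(i <- s) u i n) @[n --> \oo] --> \sum_(i <- s) l i.
Proof.
move=> h; elim: s => [|x s IH].
  rewrite big_nil; under eq_fun do rewrite big_nil; exact: cvg_cst.
rewrite big_cons; under eq_fun do rewrite big_cons; exact: cvgD.
Qed.

Lemma conj_diag_entry n (Q : 'M[R]_n) (d : 'rV[R]_n) i j :
  (Q^T *m diag_mx d *m Q) i j = \sum_l Q l i * d 0 l * Q l j.
Proof.
rewrite mxE; apply: eq_bigr => l _; rewrite mxE (bigD1 l) //= big1 ?addr0.
  by rewrite !mxE eqxx mulr1n.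
by move=> k /negbTE kl; rewrite !mxE kl mulr0n mulr0.
Qed.

Lemma pow_conj_diag n (Q : 'M[R]_n) (m : 'rV[R]_n) k :
  Q *m Q^T = 1%:M -> Q^T *m Q = 1%:M ->
  (Q^T *m diag_mx m *m Q) ^+ k = Q^T *m diag_mx (\row_l m 0 l ^+ k) *m Q.
Proof.
move=> QQt QtQ; elim: k => [|k IH].
  rewrite expr0 (_ : diag_mx _ = 1%:M); last first.
    by apply/matrixP => i j; rewrite !mxE expr0.
  by rewrite mulmx1 QtQ.
rewrite exprS IH -mulmxE !mulmxA -(mulmxA _ Q) QQt mulmx1 -(mulmxA _ (diag_mx m)) mulmx_diag.
by congr (_ *m diag_mx _ *m _); apply/rowP => l; rewrite !mxE exprS.
Qed.

Lemma expm_conj_diag n (Q : 'M[R]_n) (m : 'rV[R]_n) :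
  Q *m Q^T = 1%:M -> Q^T *m Q = 1%:M ->
  expm (Q^T *m diag_mx m *m Q) = Q^T *m diag_mx (\row_l expR (m 0 l)) *m Q.
Proof.
move=> QQt QtQ; apply/matrixP => i j; rewrite /expm mxE conj_diag_entry.
have ps N : (\sum_(k < N) (k`!%:R)^-1 *: (Q^T *m diag_mx m *m Q) ^+ k) i j =
    \sum_l Q l i * series (exp_coeff (m 0 l)) N * Q l j.
  rewrite summxE.
  under eq_bigr do rewrite pow_conj_diag // mxE conj_diag_entry mulr_sumr.
  rewrite exchange_big /=; apply: eq_bigr => l _.
  rewrite /series /= big_mkord mulr_sumr mulr_suml; apply: eq_bigr => k _.
  by rewrite !mxE /exp_coeff /=; ring.
under eq_fun do rewrite ps.
apply: cvg_lim => //.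
apply: cvg_sum_seq => l; rewrite mxE.
apply: cvgMl; apply: cvgMr.
exact: is_cvg_series_exp_coeff.
Qed.

Lemma conj_entry n (Q A : 'M[R]_n) i j :
  (Q^T *m A *m Q) i j = \sum_l \sum_m Q l i * A l m * Q m j.
Proof.
rewrite mxE exchange_big /=; apply: eq_bigr => l _; rewrite mxE mulr_suml.
by apply: eq_bigr => m _; rewrite !mxE.
Qed.

Lemma Sigma_conj (delta : R) n (Q : 'M[R]_n) (L : 'rV[R]_n) (G : 'M[R]_n) :
  Q *m Q^T = 1%:M -> Q^T *m Q = 1%:M ->
  (forall l m, 0 < L 0 l + L 0 m - delta^-1) ->
  SigmaM delta (Q^T *m diag_mx L *m Q) G =
  Q^T *m (\matrix_(l, m) (delta * (Q *m G *m Q^T) l m / (L 0 l + L 0 m - delta^-1))) *m Q.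
Proof.
move=> QQt QtQ Lpos; apply/matrixP => i j; rewrite /SigmaM mxE.
pose G' := Q *m G *m Q^T.
pose b (p : 'I_n * 'I_n) := L 0 p.1 + L 0 p.2 - delta^-1.
pose c (p : 'I_n * 'I_n) := Q p.1 i * G' p.1 p.2 * Q p.2 j.
have E1 t : expR (t / delta) * (expm (- (t *: (Q^T *m diag_mx L *m Q))) *m G *m
      expm (- (t *: (Q^T *m diag_mx L *m Q)))) i j =
    \sum_p c p * expR (- (b p * t)).
  have -> : - (t *: (Q^T *m diag_mx L *m Q)) = Q^T *m diag_mx (- (t *: L)) *m Q.
    rewrite scalemxAl scalemxAr -mulNmx -mulmxN; congr (_ *m _ *m _).
    by apply/matrixP => a a'; rewrite !mxE; case: eqP => _; rewrite ?mulr1n ?mulr0n ?mulr0 ?oppr0.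
  rewrite expm_conj_diag //.
  set e := \row_l _.
  have -> : Q^T *m diag_mx e *m Q *m G *m (Q^T *m diag_mx e *m Q) =
      Q^T *m (diag_mx e *m G' *m diag_mx e) *m Q.
    by rewrite /G' !mulmxA.
  rewrite conj_entry pair_big /= mulr_sumr; apply: eq_bigr => p _.
  rewrite /c /b mul_mx_diag mul_diag_mx !mxE.
  have -> : expR (- ((L 0 p.1 + L 0 p.2 - delta^-1) * t)) =
      expR (t / delta) * expR (- (t * L 0 p.1)) * expR (- (t * L 0 p.2)).
    by rewrite -!expRD; congr expR; ring.
  ring.
rewrite (_ : (fun t => _) = (fun t => \sum_p c p * expR (- (b p * t)))); last first.
  by apply/funext => t; exact: E1.
rewrite int_expsum; last by move=> p; exact: Lpos.
rewrite conj_entry pair_big /= mulr_sumr; apply: eq_bigr => p _.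
by rewrite /c /b mxE; ring.
Qed.

End An.

Section Alg.
Variable R : realType.

Definition qf n (x : 'rV[R]_n) (A : 'M[R]_n) := (x *m A *m x^T) 0 0.

Lemma qfE n (x : 'rV[R]_n) A : qf x A = \sum_i \sum_j x 0 i * A i j * x 0 j.
Proof.
rewrite /qf mxE (eq_bigr (fun k => \sum_i x 0 i * A i k * x 0 k)); last first.
  by move=> k _; rewrite !mxE mulr_suml.
by rewrite exchange_big.
Qed.

Lemma qf_conj n (x : 'rV[R]_n) (Q A : 'M[R]_n) : qf x (Q^T *m A *m Q) = qf (x *m Q^T) A.
Proof. by rewrite /qf trmx_mul trmxK !mulmxA. Qed.

Lemma qf_diag n (x : 'rV[R]_n) (d : 'rV[R]_n) : qf x (diag_mx d) = \sum_i d 0 i * x 0 i ^+ 2.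
Proof.
rewrite qfE; apply: eq_bigr => i _; rewrite (bigD1 i) //= big1 ?addr0.
  by rewrite !mxE eqxx mulr1n; ring.
by move=> j /negbTE ji; rewrite !mxE eq_sym ji mulr0n mulr0 mul0r.
Qed.

Lemma psd_conj n (Q A : 'M[R]_n) : psd A -> psd (Q^T *m A *m Q).
Proof.
move=> [As Ap]; split.
  by rewrite /Defs.symmetric !trmx_mul trmxK As mulmxA.
by move=> x; have := Ap (x *m Q^T); rewrite trmx_mul trmxK !mulmxA.
Qed.

Lemma sym_entry n (A : 'M[R]_n) i j : A^T = A -> A j i = A i j.
Proof. by move=> As; have := congr1 (fun M : 'M[R]_n => M i j) As; rewrite mxE. Qed.

Lemma qfB n (x : 'rV[R]_n) (A B : 'M[R]_n) : qf x (A - B) = qf x A - qf x B.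
Proof. by rewrite /qf mulmxBr mulmxBl !mxE. Qed.

Lemma qf_scale n (x : 'rV[R]_n) (A : 'M[R]_n) (f : 'I_n -> R) :
  qf x (\matrix_(i, j) (f i * A i j * f j)) = qf (\row_i (x 0 i * f i)) A.
Proof. by rewrite !qfE; apply: eq_bigr => i _; apply: eq_bigr => j _; rewrite !mxE; ring. Qed.

Lemma psd_scale n (A : 'M[R]_n) (f : 'I_n -> R) :
  psd A -> psd (\matrix_(i, j) (f i * A i j * f j)).
Proof.
move=> [As Ap]; split.
  by apply/matrixP => i j; rewrite !mxE (sym_entry _ _ As); ring.
move=> x; have := Ap (\row_i (x 0 i * f i)).
rewrite -[(_ *m A *m _) 0 0]/(qf _ A) -[(x *m _ *m _) 0 0]/(qf _ _) !qfE.
congr (_ <= _); apply: eq_bigr => i _; apply: eq_bigr => j _; rewrite !mxE; ring.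
Qed.

Lemma eig_conj n (Q X : 'M[R]_n) a : Q *m Q^T = 1%:M -> Q^T *m Q = 1%:M ->
  eigenvalue (Q^T *m X *m Q) a = eigenvalue X a.
Proof.
move=> QQt QtQ; apply/eigenvalueP/eigenvalueP => [[v vE v0]|[v vE v0]].
  exists (v *m Q^T).
    have := congr1 (mulmx^~ Q^T) vE.
    by rewrite /= !mulmxA -(mulmxA _ Q) QQt mulmx1 -scalemxAl.
  apply: contraNneq v0 => h.
  by rewrite -[v]mulmx1 -QtQ mulmxA h mul0mx.
exists (v *m Q).
  by rewrite !mulmxA -(mulmxA v) QQt mulmx1 vE scalemxAl.
apply: contraNneq v0 => h.
by rewrite -[v]mulmx1 -QQt mulmxA h mul0mx.
Qed.

Lemma eig_diag n (D : 'rV[R]_n) l : eigenvalue (diag_mx D) (D 0 l).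
Proof.
apply/eigenvalueP; exists (delta_mx 0 l).
  apply/rowP => j; rewrite mul_mx_diag !mxE.
  by rewrite eqxx /=; case: eqP => [->|_]; rewrite ?mulr1 ?mulr0 ?mul1r ?mul0r.
apply/eqP => /rowP /(_ l); rewrite !mxE !eqxx /= => /eqP.
by rewrite oner_eq0.
Qed.

Lemma eig_diag_in n (D : 'rV[R]_n) a : eigenvalue (diag_mx D) a -> exists l, a = D 0 l.
Proof.
move=> /eigenvalueP [v vE v0].
have /existsP [l vl] : [exists l, v 0 l != 0].
  apply: contraR v0 => /existsPn h; apply/eqP/rowP => l; rewrite mxE.
  by have := h l; rewrite negbK => /eqP.
exists l; have := congr1 (fun w : 'rV_n => w 0 l) vE.
rewrite mul_mx_diag !mxE => /eqP; rewrite mulrC -subr_eq0 -mulrBl mulf_eq0 (negbTE vl) orbF.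
by rewrite subr_eq0 => /eqP.
Qed.

Lemma spec_eig n (S P : 'M[R]_n) (D : 'rV[R]_n) l :
  P *m P^T = 1%:M -> S = P^T *m diag_mx D *m P -> eigenvalue S (D 0 l).
Proof.
by move=> PPt ->; rewrite (eig_conj _ _ PPt (mulmx1C PPt)); exact: eig_diag.
Qed.

Lemma spec_eig_in n (S P : 'M[R]_n) (D : 'rV[R]_n) a :
  P *m P^T = 1%:M -> S = P^T *m diag_mx D *m P -> eigenvalue S a -> exists l, a = D 0 l.
Proof.
by move=> PPt ->; rewrite (eig_conj _ _ PPt (mulmx1C PPt)); exact: eig_diag_in.
Qed.

Lemma spec_qf n (S P : 'M[R]_n) (D : 'rV[R]_n) x :
  S = P^T *m diag_mx D *m P -> qf x S = \sum_l D 0 l * (x *m P^T) 0 l ^+ 2.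
Proof. by move=> ->; rewrite qf_conj qf_diag. Qed.

Lemma psd_of_eigs n (S : 'M[R]_n) : S^T = S ->
  (forall a, eigenvalue S a -> 0 <= a) -> psd S.
Proof.
move=> Ss h; have [P [D [PPt SE]]] := spectral_real Ss; split => // x.
rewrite -[(_ *m _) 0 0]/(qf x S) (spec_qf _ SE) sumr_ge0 // => l _.
by rewrite mulr_ge0 ?sqr_ge0 // h // (spec_eig _ PPt SE).
Qed.

Lemma nz_row_pos n (p : 'rV[R]_n) (a : 'I_n -> R) : p != 0 -> (forall i, 0 < a i) ->
  0 < \sum_i a i * p 0 i ^+ 2.
Proof.
move=> p0 apos.
have /existsP [l pl] : [exists l, p 0 l != 0].
  apply: contraR p0 => /existsPn h; apply/eqP/rowP => l; rewrite mxE.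
  by have := h l; rewrite negbK => /eqP.
rewrite (bigD1 l) //=.
have h1 : 0 < a l * p 0 l ^+ 2 by rewrite mulr_gt0 // exprn_even_gt0.
have h2 : 0 <= \sum_(i | i != l) a i * p 0 i ^+ 2.
  by rewrite sumr_ge0 // => i _; rewrite mulr_ge0 ?sqr_ge0 // ltW.
lra.
Qed.

Lemma lyap n (X : 'M[R]_n) (a : 'I_n -> R) : X^T = X -> (forall i, 0 < a i) ->
  psd (\matrix_(i, j) ((a i + a j) * X i j)) -> psd X.
Proof.
move=> Xs apos [_ Yp]; apply: psd_of_eigs => // mu /eigenvalueP [p pX p0].
have Xp : X *m p^T = mu *: p^T.
  by rewrite -{1}Xs -trmx_mul pX linearZ.
pose Y := \matrix_(i, j) ((a i + a j) * X i j).
have key : qf p Y = 2 * mu * \sum_i a i * p 0 i ^+ 2.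
  rewrite qfE.
  have -> : \sum_i \sum_j p 0 i * Y i j * p 0 j =
      \sum_i \sum_j (a i * p 0 i * (X i j * p 0 j)) +
      \sum_i \sum_j (a j * p 0 j * (p 0 i * X i j)).
    rewrite -big_split; apply: eq_bigr => i _; rewrite -big_split.
    by apply: eq_bigr => j _ /=; rewrite mxE; ring.
  rewrite [X in _ + X]exchange_big /=.
  have -> : \sum_i \sum_j a i * p 0 i * (X i j * p 0 j) = \sum_i a i * p 0 i * (mu * p 0 i).
    apply: eq_bigr => i _; rewrite -mulr_sumr; congr (_ * _).
    have := congr1 (fun M : 'cV_n => M i 0) Xp; rewrite !mxE => <-.
    by apply: eq_bigr => j _; rewrite mxE.
  have -> : \sum_j \sum_i a j * p 0 j * (p 0 i * X i j) = \sum_j a j * p 0 j * (mu * p 0 j).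
    apply: eq_bigr => j _; rewrite -mulr_sumr; congr (_ * _).
    have := congr1 (fun M : 'rV_n => M 0 j) pX; rewrite !mxE => <-.
    by [].
  rewrite mulr_sumr -big_split; apply: eq_bigr => i _ /=; ring.
have := Yp p; rewrite -[(_ *m _) 0 0]/(qf p Y) key => h.
by move: h; rewrite pmulr_lge0 ?nz_row_pos // pmulr_rge0.
Qed.

End Alg.

Section Main.
Variable R : realType.

Lemma opnorm_conj n (Q X : 'M[R]_n) : Q *m Q^T = 1%:M -> Q^T *m Q = 1%:M ->
  opnorm (Q^T *m X *m Q) = opnorm X.
Proof.
move=> QQt QtQ; rewrite /opnorm; congr sup.
apply/seteqP; split => _ [a ha <-]; exists a => //=.
  by move: ha => /=; rewrite eig_conj.
by rewrite eig_conj.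
Qed.

Lemma opnorm_facts n (X : 'M[R]_n) : X^T = X ->
  0 <= opnorm X /\ forall x, qf x X <= opnorm X * (x *m x^T) 0 0.
Proof.
move=> Xs; have [P [D [PPt XE]]] := spectral_real Xs.
set E := [set `|a| | a in [set a : R | eigenvalue X a]].
have oE : opnorm X = sup E by [].
have hub : has_ubound E.
  exists (\sum_l `|D 0 l|) => _ [a ha <-].
  have [l ->] := spec_eig_in PPt XE ha.
  rewrite (bigD1 l) //= lerDl sumr_ge0 // => i _; exact: normr_ge0.
have le l : `|D 0 l| <= opnorm X.
  rewrite oE; apply: ub_le_sup => //; exists (D 0 l) => //; exact: spec_eig PPt XE.
have ge0 : 0 <= opnorm X.
  rewrite oE; case: (pselect (E !=set0)) => [[y Ey]|nE].
    apply: le_trans (ub_le_sup hub Ey).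
    by case: Ey => a _ <-; exact: normr_ge0.
  have -> : E = set0 by apply/seteqP; split => // y Ey; apply: nE; exists y.
  by rewrite sup0.
split => // x.
rewrite (spec_qf _ XE).
have -> : (x *m x^T) 0 0 = ((x *m P^T) *m (x *m P^T)^T) 0 0.
  by rewrite trmx_mul trmxK mulmxA -(mulmxA x) (mulmx1C PPt) mulmx1.
rewrite nsqE mulr_sumr; apply: ler_sum => l _.
apply: ler_wpM2r; first exact: sqr_ge0.
exact: le_trans (ler_norm _) (le l).
Qed.

Lemma poly_ineq (u v : R) : 1 <= u -> u <= v ->
  (u - 1) ^+ 2 * (2 * v - 1) <= (v - 1) ^+ 2 * (2 * u - 1).
Proof.
move=> u1 uv; rewrite -subr_ge0.
have -> : (v - 1) ^+ 2 * (2 * u - 1) - (u - 1) ^+ 2 * (2 * v - 1) =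
  (v - u) * (2 * (u - 1) * (v - 1) + (u - 1) + (v - 1)) by ring.
apply: mulr_ge0; first lra.
have h1 : 0 <= u - 1 by lra.
have h2 : 0 <= v - 1 by lra.
have := mulr_ge0 h1 h2; lra.
Qed.

End Main.

Theorem proposition3 (R : realType) (d : nat) (H Gamma : 'M[R]_d)
    (lambda1 lambdad delta : R) :
  posdef H ->
  eigenvalue H lambda1 -> eigenvalue H lambdad ->
  (forall a : R, eigenvalue H a -> lambda1 <= a /\ a <= lambdad) ->
  psd Gamma ->
  1 / lambda1 < delta ->
  psd (SigmaM delta H Gamma - DeltaM H Gamma) /\
  opnorm (SigmaM delta H Gamma - DeltaM H Gamma)
    <= (delta * lambdad - 1) ^+ 2 / (2 * delta * lambdad - 1)
       * opnorm (DeltaM H Gamma).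
Proof.
move=> [Hs Hp] hl1 hld hb Gpsd hdel.
have [Q [L [QQt HE]]] := spectral_real Hs.
have QtQ := mulmx1C QQt.
have Lb l : lambda1 <= L 0 l /\ L 0 l <= lambdad by apply: hb; exact: spec_eig QQt HE.
have l1pos : 0 < lambda1.
  have /eigenvalueP [v vH v0] := hl1.
  have := Hp v v0; rewrite vH -scalemxAl mxE => h.
  have n0 : 0 < (v *m v^T) 0 0 by rewrite lt_def nsq_eq0 v0 nsq_ge0.
  by move: h; rewrite pmulr_lgt0.
have dpos : 0 < delta by apply: lt_trans hdel; rewrite divr_gt0.
have dl1 : 1 < delta * lambda1 by move: hdel; rewrite ltr_pdivrMr.
have Lpos l : 0 < L 0 l by have [] := Lb l => *; lra.
have dL l : 1 < delta * L 0 l.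
  have [h _] := Lb l; apply: lt_le_trans dl1 _; by rewrite ler_pM2l.
have dinv l : delta^-1 < L 0 l.
  by rewrite -(ltr_pM2l dpos) mulfV ?gt_eqF.
have bpos l m : 0 < L 0 l + L 0 m - delta^-1.
  by have := dinv l; have := Lpos m; lra.
pose G' := Q *m Gamma *m Q^T.
have G'psd : psd G' by have := psd_conj (Q^T) Gpsd; rewrite trmxK.
pose Li := \row_l (L 0 l)^-1.
have Hinv : invmx H = Q^T *m diag_mx Li *m Q.
  have HBi : H *m (Q^T *m diag_mx Li *m Q) = 1%:M.
    rewrite HE !mulmxA -(mulmxA _ Q) QQt mulmx1 -(mulmxA _ (diag_mx L)) mulmx_diag.
    rewrite (_ : diag_mx _ = 1%:M); first by rewrite mulmx1 QtQ.
    by apply/matrixP => i j; rewrite !mxE mulfV ?(gt_eqF (Lpos i)).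
  have Hu : H \in unitmx by case: (mulmx1_unit HBi).
  by rewrite -[invmx H]mulmx1 -HBi mulmxA mulVmx // mul1mx.
pose S' := \matrix_(l, m) (delta * G' l m / (L 0 l + L 0 m - delta^-1)).
pose D' := \matrix_(l, m) (Li 0 l * G' l m * Li 0 m).
have SE : SigmaM delta H Gamma = Q^T *m S' *m Q by rewrite HE Sigma_conj.
have DE : DeltaM H Gamma = Q^T *m D' *m Q.
  rewrite /DeltaM Hinv.
  have -> : Q^T *m diag_mx Li *m Q *m Gamma *m (Q^T *m diag_mx Li *m Q) =
      Q^T *m (diag_mx Li *m G' *m diag_mx Li) *m Q by rewrite /G' !mulmxA.
  congr (_ *m _ *m _); apply/matrixP => i j.
  by rewrite mul_mx_diag mul_diag_mx !mxE.
clearbody G'.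
pose M' := S' - D'.
have ME : SigmaM delta H Gamma - DeltaM H Gamma = Q^T *m M' *m Q.
  by rewrite SE DE -mulmxBl -mulmxBr.
have G's : G'^T = G' := G'psd.1.
have D'psd : psd D' := psd_scale (fun l => Li 0 l) G'psd.
have D's : D'^T = D' := D'psd.1.
have S's : S'^T = S'.
  by apply/matrixP => i j; rewrite !mxE (sym_entry _ _ G's) (addrC (L 0 j)).
have M's : M'^T = M' by rewrite /M' linearB /= S's D's.
pose a l := delta * L 0 l - 2^-1.
pose c l := delta * L 0 l - 1.
have apos l : 0 < a l by have := dL l; rewrite /a; lra.
have YM : \matrix_(i, j) ((a i + a j) * M' i j) = \matrix_(i, j) (c i * D' i j * c j).
  apply/matrixP => i j; rewrite !mxE.
  have hi := Lpos i; have hj := Lpos j; have hbij := bpos i j.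
  have h4 : 0 < (L 0 i + L 0 j) * delta - 1.
    by have := mulr_gt0 hbij dpos; rewrite mulrBl mulVf ?(gt_eqF dpos).
  rewrite /a /c; field.
  by rewrite (gt_eqF hi) (gt_eqF hj) (gt_eqF dpos) (gt_eqF h4).
have M'psd : psd M'.
  by apply: (@lyap _ _ _ a) => //; rewrite YM; exact: psd_scale c D'psd.
split; first by rewrite ME; exact: psd_conj.
clearbody M' D'.
have [rho0 rhob] := opnorm_facts D's.
set rho := opnorm D' in rho0 rhob *.
set K := (delta * lambdad - 1) ^+ 2 / (2 * delta * lambdad - 1).
have dld : 1 < delta * lambdad.
  have [_ h] := hb _ hl1.
  by apply: lt_le_trans dl1 _; rewrite ler_pM2l.
have K0 : 0 <= K by rewrite /K divr_ge0 ?sqr_ge0 //; lra.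
have cK l : c l ^+ 2 <= 2 * K * a l.
  have [_ h] := Lb l.
  have u1 : 1 <= delta * L 0 l by have := dL l; lra.
  have uv : delta * L 0 l <= delta * lambdad by rewrite ler_pM2l.
  have := poly_ineq u1 uv.
  have h2 : 0 < 2 * delta * lambdad - 1 by lra.
  rewrite /c /a /K => hp.
  rewrite -(ler_pM2r h2).
  have -> : 2 * ((delta * lambdad - 1) ^+ 2 / (2 * delta * lambdad - 1)) * (delta * L 0 l - 2^-1) * (2 * delta * lambdad - 1) = (delta * lambdad - 1) ^+ 2 * (2 * (delta * L 0 l) - 1).
    by field; rewrite gt_eqF.
  by rewrite mulrA in hp |- *; lra.
pose N' := (K * rho)%:M - M'.
have N's : N'^T = N' by rewrite /N' linearB /= tr_scalar_mx M's.
have N'psd : psd N'.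
  apply: (@lyap _ _ _ a) => //; split.
    apply/matrixP => i j; rewrite [LHS]mxE [LHS]mxE [RHS]mxE (sym_entry _ _ N's).
    by rewrite (addrC (a j)).
  move=> x.
  have YN : \matrix_(i, j) ((a i + a j) * N' i j) =
      diag_mx (\row_i (2 * (K * rho) * a i)) - \matrix_(i, j) (c i * D' i j * c j).
    apply/matrixP => i j; have := congr1 (fun M : 'M[R]_d => M i j) YM; rewrite !mxE => e.
    rewrite -e; case: (eqVneq i j) => [->|/negbTE ij]; rewrite ?eqxx ?ij ?mulr1n ?mulr0n; ring.
  rewrite -[(_ *m _) 0 0]/(qf x _) YN qfB qf_diag qf_scale subr_ge0.
  apply: le_trans (rhob _) _; rewrite nsqE mulr_sumr; apply: ler_sum => i _; rewrite !mxE.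
  have h := ler_wpM2l (mulr_ge0 rho0 (sqr_ge0 (x 0 i))) (cK i).
  have e1 : rho * (x 0 i * c i) ^+ 2 = rho * x 0 i ^+ 2 * c i ^+ 2 by ring.
  have e2 : 2 * (K * rho) * a i * x 0 i ^+ 2 = rho * x 0 i ^+ 2 * (2 * K * a i) by ring.
  by rewrite e1 e2.
rewrite ME DE (opnorm_conj _ QQt QtQ) (opnorm_conj _ QQt QtQ) -/rho.
have eb b : eigenvalue M' b -> `|b| <= K * rho.
  move=> /eigenvalueP [v vM v0].
  have nv : 0 < (v *m v^T) 0 0 by rewrite lt_def nsq_eq0 v0 nsq_ge0.
  have h1 := M'psd.2 v; rewrite vM -scalemxAl mxE in h1.
  have h2 := N'psd.2 v.
  rewrite /N' mulmxBr mul_mx_scalar vM -scalerBl -scalemxAl mxE in h2.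
  have b0 : 0 <= b by move: h1; rewrite pmulr_lge0.
  have b1 : 0 <= K * rho - b by move: h2; rewrite pmulr_lge0.
  rewrite ger0_norm //; lra.
rewrite /opnorm; case: (pselect ([set `|a0| | a0 in [set a0 : R | eigenvalue M' a0]] !=set0)) => [ne|nE].
  by apply: ge_sup ne _ => _ [b hb0 <-]; exact: eb.
have -> : [set `|a0| | a0 in [set a0 : R | eigenvalue M' a0]] = set0.
  by apply/seteqP; split => // y Ey; apply: nE; exists y.
by rewrite sup0 mulr_ge0.
Qed.
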